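(* Let $G$ be a 2-connected graph, let $(T,\mathcal{V})$ be a full tree decomposition of $G$, and let $t\in V(T)$. If $\mathrm{lct}(G)>|V_t|-2$, then $V_t$ has an $\ell$-attractor with $\ell\leq 2$, i.e. there is a longest cycle of $G$ that is an $\ell$-attractor for $V_t$ for some $\ell\le 2$.
   Context: All graphs are finite and simple. A tree decomposition of $G$ is a pair $(T,\mathcal{V})$, $T$ a tree and $\mathcal{V}=\{V_t:t\in V(T)\}$ a collection of distinct subsets (bags) of $V(G)$, such that every vertex lies in a bag, every edge has both ends in some bag, and for each vertex the nodes whose bags contain it form a subtree of $T$. If $G$ has treewidth $k$ (the minimum over tree decompositions of the maximum bag size minus one), a full tree decomposition is a tree decomposition with $|V_t|=k+1$ for all nodes $t$ and $|V_t\cap V_{t'}|=k$ for all edges $tt'\in E(T)$. $\mathrm{lct}(G)$ is the minimum cardinality of a set of vertices meeting every longest cycle of $G$. For $S\subseteq V(G)$, $S$ separates a vertex set $X$ if two vertices of $X$ lie in different components of $G-S$; a cycle $C$ crosses $S$ if $S$ separates $V(C)$, and otherwise $C$ is fenced by $S$. Two cycles are $S$-equivalent if they have the same intersection with $S$. A longest cycle $C$ is an attractor for $S$ if $C$ is fenced by $S$ and every longest cycle $S$-equivalent to $C$ is also fenced by $S$; it is an $\ell$-attractor for $S$ if moreover $|V(C)\cap S|=\ell$. *)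

(* Defs.v *)
(* A finite simple graph is a symmetric irreflexive
   relation e : rel T on a finite type T of vertices. *)
From mathcomp Require Import all_boot.
From Stdlib Require Import ClassicalEpsilon.
Set Implicit Arguments. Unset Strict Implicit. Unset Printing Implicit Defensive.

Definition asbool (P : Prop) : bool :=
  if excluded_middle_informative P then true else false.

Section Graphs.
Variable T : finType.
Implicit Types (e : rel T) (A S X : {set T}) (c : seq T).

Definition restrict e A : rel T := [rel x y | [&& x \in A, y \in A & e x y]].

Definition connected_in e A : Prop :=
  {in A &, forall x y, connect (restrict e A) x y}.

Definition is_cycle e c : Prop := [/\ uniq c, 3 <= size c & cycle e c].

Definition cverts c : {set T} := [set x in c].

Definition longest_cycle e c : Prop :=
  is_cycle e c /\ forall c', is_cycle e c' -> size c' <= size c.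

Definition hitting e X : Prop :=
  forall c, longest_cycle e c -> exists2 x, x \in X & x \in c.

(* lct(G): minimum cardinality of a set meeting every longest cycle
   (every hitting set has size <= #|T|, so #|T| is a neutral start value) *)
Definition lct e : nat :=
  \big[minn/#|T|]_(X : {set T} | asbool (hitting e X)) #|X|.

Definition two_connected e : Prop :=
  2 < #|T| /\ forall Y : {set T}, #|Y| < 2 -> connected_in e (~: Y).

Definition separates e S X : Prop :=
  exists x y, [/\ x \in X :\: S, y \in X :\: S &
                  ~~ connect (restrict e (~: S)) x y].

Definition crosses e S c : Prop := separates e S (cverts c).
Definition fenced e S c : Prop := ~ crosses e S c.

Definition S_equivalent S c c' : Prop := cverts c :&: S = cverts c' :&: S.

Definition attractor e S c : Prop :=
  [/\ longest_cycle e c, fenced e S c &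
      forall c', longest_cycle e c' -> S_equivalent S c c' -> fenced e S c'].

Definition l_attractor e S c (l : nat) : Prop :=
  attractor e S c /\ #|cverts c :&: S| = l.

End Graphs.

Definition is_tree (I : finType) (tE : rel I) : Prop :=
  [/\ symmetric tE, irreflexive tE, 0 < #|I|, connected_in tE setT &
      forall c, ~ is_cycle tE c].

Definition is_td (T I : finType) (e : rel T) (tE : rel I) (B : I -> {set T}) : Prop :=
  [/\ is_tree tE,
      injective B,
      forall x, exists i, x \in B i,
      forall x y, e x y -> exists i, (x \in B i) && (y \in B i) &
      forall x, connected_in tE [set i | x \in B i]].

Definition td_width (T I : finType) (B : I -> {set T}) : nat :=
  (\max_(i : I) #|B i|).-1.

Definition treewidth (T : finType) (e : rel T) (k : nat) : Prop :=
  (exists (I : finType) (tE : rel I) (B : I -> {set T}),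
      is_td e tE B /\ td_width B = k) /\
  (forall (I : finType) (tE : rel I) (B : I -> {set T}),
      is_td e tE B -> k <= td_width B).

Definition full_td (T I : finType) (e : rel T) (k : nat) (tE : rel I)
    (B : I -> {set T}) : Prop :=
  [/\ is_td e tE B, treewidth e k,
      forall i, #|B i| = k.+1 &
      forall i j, tE i j -> #|B i :&: B j| = k].

(* Main.v *)
Require Import Defs.
From mathcomp Require Import all_boot.
From Stdlib Require Import Classical ClassicalEpsilon.
From mathcomp Require Import zify.
Set Implicit Arguments. Unset Strict Implicit. Unset Printing Implicit Defensive.

Lemma ar1 (w p d a : nat) : 0 < w -> d <= p.*2 -> 3 <= d -> 3 <= (p + (w + a)).+1.
Proof. move=> *; lia. Qed.
Lemma ar2 (w p d a : nat) : 0 < w -> d <= p.*2 -> d <= a.+1.*2 -> (p + (w + a)).+1 <= d -> False.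
Proof. move=> *; lia. Qed.

Section Gen.
Variable T : finType.
Variable e : rel T.
Hypothesis esym : symmetric e.

Lemma restr_sym (A : {set T}) : symmetric (restrict e A).
Proof. by move=> x y; rewrite /restrict /= esym andbCA. Qed.

Lemma restr_csym (A : {set T}) x y :
  connect (restrict e A) x y = connect (restrict e A) y x.
Proof. by apply: sym_connect_sym; apply: restr_sym. Qed.

Lemma path_restr_mem (A : {set T}) x s :
  path (restrict e A) x s -> {subset s <= A}.
Proof.
elim: s x => //= y s IH x /andP[/and3P[_ yA _] /IH H] z.
by rewrite inE => /orP[/eqP->|/H].
Qed.

Lemma path_restr_e (A : {set T}) x s : path (restrict e A) x s -> path e x s.
Proof. by apply: sub_path => u v /and3P[]. Qed.

Lemma path_to_restr (A : {set T}) x s :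
  x \in A -> {subset s <= A} -> path e x s -> path (restrict e A) x s.
Proof.
move=> xA sA; apply: (@sub_in_path _ (mem A)).
  by move=> u v uA vA euv; rewrite /restrict /= uA vA euv.
by rewrite /=; apply/andP; split => //; apply/allP.
Qed.

Lemma seg (A : {set T}) x s : x \in A -> {subset s <= A} -> path e x s ->
  {in x :: s, forall y, connect (restrict e A) x y}.
Proof. by move=> xA sA p y; apply: path_connect; apply: path_to_restr. Qed.

Lemma connect_restr_mem (A : {set T}) x y :
  connect (restrict e A) x y -> x != y -> y \in A.
Proof.
move=> /connectP[s p ->] ne; case/lastP: s p ne => [|s z]; first by rewrite eqxx.
move=> p _; apply: (path_restr_mem p); by rewrite last_rcons mem_rcons mem_head.
Qed.

Lemma bridge0 (r : rel T) (P1 P2 : pred T) (U : pred T) :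
  (forall y, P1 y -> ~~ P2 y) ->
  forall s x, (exists y m, [/\ P1 y, path r y m, last y m = x,
                  all (fun u => ~~ P1 u && ~~ P2 u) m & {subset y :: m <= U}]) ->
  {subset s <= U} -> path r x s -> P2 (last x s) ->
  exists y m z, [/\ P1 y, path r y (rcons m z), P2 z,
      all (fun u => ~~ P1 u && ~~ P2 u) m & {subset y :: rcons m z <= U}].
Proof.
move=> h12; elim=> [|z0 s IH] x [y [m [Py pm lm gm sm]]] sU /=.
  move=> _ P2x; exfalso; move: P2x.
  case/lastP: m pm lm gm sm => [|m z] /=; first by move=> _ <- _ _; rewrite (negPf (h12 _ Py)).
  rewrite last_rcons => _ <- /allP /(_ z) ; rewrite mem_rcons mem_head => /(_ isT).
  by case/andP => _ /negPf ->.
move=> /andP[rxz pz] l2.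
have z0U : z0 \in U by apply: sU; rewrite mem_head.
have sU' : {subset s <= U} by move=> u us; apply: sU; rewrite inE us orbT.
case: (boolP (P2 z0)) => P2z.
  exists y, m, z0; split => //; first by rewrite rcons_path pm lm rxz.
  by move=> u; rewrite -rcons_cons mem_rcons inE => /orP[/eqP->|/sm].
case: (boolP (P1 z0)) => P1z.
  apply: (IH z0) => //; exists z0, [::]; split => //.
  by move=> u; rewrite inE => /eqP->.
apply: (IH z0) => //; exists y, (rcons m z0); split => //.
- by rewrite rcons_path pm lm rxz.
- by rewrite last_rcons.
- by rewrite all_rcons P1z P2z gm.
- by move=> u; rewrite -rcons_cons mem_rcons inE => /orP[/eqP->|/sm].
Qed.

Lemma bridge (r : rel T) (P1 P2 : pred T) x s :
  (forall y, P1 y -> ~~ P2 y) -> P1 x -> path r x s -> P2 (last x s) ->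
  exists y w, [/\ P1 y, path r y w, uniq (y :: w), P2 (last y w) &
    w != [::]] /\ ({in w, forall u, u != last y w -> ~~ P1 u && ~~ P2 u} /\
    {subset y :: w <= x :: s}).
Proof.
move=> h12 P1x pxs P2l.
have [y [m [z [Py pm Pz gm sm]]]] : exists y m z, [/\ P1 y, path r y (rcons m z), P2 z,
      all (fun u => ~~ P1 u && ~~ P2 u) m & {subset y :: rcons m z <= x :: s}].
  apply: (@bridge0 r P1 P2 (mem (x :: s)) h12 s x) => //.
  - exists x, [::]; split => //; by move=> u; rewrite inE => /eqP->; rewrite mem_head.
  - by move=> u us; rewrite inE us orbT.
have hz : last y (rcons m z) = z by rewrite last_rcons.
move: hz; case: (shortenP pm) => w pw uw sw lw.
exists y, w; split; first split => //.
- by rewrite lw.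
- by case: w lw {pw uw sw} => //= lw; move: Pz; rewrite -lw (negPf (h12 _ Py)).
split.
- move=> u uw' ne; have := sw _ uw'; rewrite mem_rcons inE -lw (negPf ne) /=.
  by move/(allP gm).
- move=> u; rewrite inE => /orP[/eqP->|/sw uw']; first by apply: sm; rewrite mem_head.
  by apply: sm; rewrite inE uw' orbT.
Qed.


Lemma last_in x (w : seq T) : w != [::] -> last x w \in w.
Proof. by case: w => //= y s _; rewrite mem_last. Qed.

Lemma sym_path x s : path (fun z => e^~ z) x s = path e x s.
Proof. by apply: eq_path => u v; rewrite esym. Qed.

Lemma cyc_arc a C' c : cycle e (a :: C') -> uniq (a :: C') -> c \in C' ->
  exists A, [/\ path e a A, last a A = c, {subset A <= C'}, uniq (a :: A) &
     size (a :: C') <= (size A).*2].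
Proof.
move=> cy u cin; case/splitPr: cin cy u => E1 E2.
rewrite /= rcons_cat cat_path /= => /and3P[p1 ec p2] u.
have uu : uniq ((a :: rcons E1 c) ++ E2) by rewrite /= cat_rcons.
case: (leqP (size E2) (size E1)) => hs.
- exists (rcons E1 c); split.
  + by rewrite rcons_path p1 ec.
  + by rewrite last_rcons.
  + by move=> u0; rewrite mem_rcons inE mem_cat inE => /orP[->|->]; rewrite ?orbT.
  + by move: uu; rewrite cat_uniq => /andP[].
  + rewrite /= size_cat size_rcons /= -addnn; move: hs; set n1 := size E1; set n2 := size E2; move=> hs; lia.
- exists (rev (c :: E2)); split.
  + have := rev_path e c (rcons E2 a); rewrite last_rcons belast_rcons sym_path => ->.
    exact: p2.
  + by rewrite rev_cons last_rcons.
  + by move=> u0; rewrite mem_rev mem_cat => ->; rewrite orbT.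
  + move: u; rewrite /= mem_rev rev_uniq !mem_cat !negb_or cat_uniq => /andP[/andP[_ ->] /and3P[_ _ ->]].
    by rewrite andbT.
  + rewrite /= size_rev size_cat /= -addnn; move: hs; set n1 := size E1; set n2 := size E2; move=> hs; lia.
Qed.

Lemma cyc_join D a pp w :
  longest_cycle e D -> a \in D -> path e a pp -> uniq (a :: pp) ->
  {in pp, forall u, u \notin D} -> path e (last a pp) w -> uniq w ->
  w != [::] -> last (last a pp) w \in D ->
  {in w, forall u, u \in D -> u = last (last a pp) w} ->
  {in w, forall u, u \notin a :: pp} -> size D <= (size pp).*2 -> False.
Proof.
move=> [[uD sD cD] lD] aD ppp upp ppD pw uw wn dD wD wpp hsz.
set d := last (last a pp) w in dD wD *.
case: (rot_to aD) => i D' rD.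
have cD' : cycle e (a :: D') by rewrite -rD rot_cycle.
have uD' : uniq (a :: D') by rewrite -rD rot_uniq.
have sD' : size (a :: D') = size D by rewrite -rD size_rot.
have memD u : (u \in D) = (u \in a :: D') by rewrite -rD mem_rot.
have dD' : d \in D'.
  move: dD; rewrite memD inE => /orP[/eqP da|//].
  have : d \notin a :: pp := wpp _ (last_in (last a pp) wn).
  by rewrite da mem_head.
have [A [pA lA sA uA hA]] := cyc_arc cD' uD' dD'.
case/lastP: A pA lA sA uA hA => [|A' z]; first by move=> _ /= da; move: uD' dD'; rewrite /= -da => /andP[/negP h _] /h.
rewrite last_rcons => pA zd sA uA hA; subst z.
set cyc := a :: pp ++ w ++ rev A'.
have ccyc : cycle e cyc.
  rewrite /cyc /= rcons_cat cat_path ppp /= rcons_cat cat_path pw /=.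
  have := rev_path e a (rcons A' d); rewrite last_rcons belast_rcons sym_path pA.
  by rewrite rev_cons.
have ucyc : uniq cyc.
  rewrite /cyc -cat_cons cat_uniq upp cat_uniq uw rev_uniq /=.
  move: uA; rewrite /= mem_rcons inE negb_or rcons_uniq => /andP[/andP[_ aA'] /andP[dA' uA']].
  have A'D u : u \in A' -> u \in D.
    by move=> uA''; rewrite memD inE; apply/orP; right; apply: sA; rewrite mem_rcons inE uA'' orbT.
  rewrite uA' andbT has_cat negb_or -andbA; apply/and3P; split.
  - by apply/hasPn => u uw'; apply: wpp uw'.
  - apply/hasPn => u; rewrite mem_rev => uA''.
    rewrite inE negb_or; apply/andP; split.
      by apply/eqP => ua; move: aA'; rewrite -ua uA''.
    by apply/negP => /ppD; rewrite A'D.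
  - apply/hasPn => u; rewrite mem_rev => uA''; apply/negP => /wD.
    by move/(_ (A'D _ uA'')) => ud; move: dA'; rewrite -ud uA''.
have w1 : 0 < size w by case: (w) wn.
have hc : is_cycle e cyc.
  split => //; rewrite /cyc /= !size_cat.
  rewrite size_rev; have := (ar1 (size A') w1 hsz sD); done.
have := lD _ hc.
rewrite /cyc /= !size_cat size_rev.
move: hA; rewrite size_rcons sD' => hA.
exact: (ar2 w1 hsz hA).
Qed.

End Gen.


Section Graph.
Variable T : finType.
Variable e : rel T.
Hypothesis esym : symmetric e.
Variable S : {set T}.
Local Notation R := (restrict e (~: S)).

Lemma conn_tr x y z : connect R x y -> connect R x z -> connect R y z.
Proof. by move=> h1 h2; apply: connect_trans h2; rewrite restr_csym. Qed.

Lemma rot_is_cycle c i : is_cycle e c -> is_cycle e (rot i c).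
Proof. by case=> u s cy; split; rewrite ?rot_uniq ?size_rot ?rot_cycle. Qed.

Lemma cyc_path x s : cycle e (x :: s) -> path e x s.
Proof. by rewrite /= rcons_path => /andP[]. Qed.

Lemma seg2 x s y z : {subset x :: s <= ~: S} -> path e x s ->
  y \in x :: s -> z \in x :: s -> connect R y z.
Proof.
move=> sub p ys zs.
have xA : x \in ~: S by apply: sub; rewrite mem_head.
have sA : {subset s <= ~: S} by move=> w ws; apply: sub; rewrite inE ws orbT.
have h1 := seg xA sA p ys. have h2 := seg xA sA p zs. exact: conn_tr h1 h2.
Qed.

Lemma card2_sub (A : {set T}) x y : x \in A -> y \in A -> x != y -> 1 < #|A|.
Proof. by move=> xA yA ne; apply/card_gt1P; exists x, y. Qed.

Lemma trace_le1_fenced c : is_cycle e c -> #|cverts c :&: S| <= 1 -> fenced e S c.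
Proof.
move=> [uc sc cc] hc [x [y [xin yin nc]]]; move: nc; apply/negP/negPn.
move: xin yin; rewrite !inE => /andP[xS xc] /andP[yS yc].
case: (boolP (has (mem S) c)) => [/hasP [s0 s0c s0S] | /hasPn noS].
  all: try have s0S' : s0 \in S := s0S.
- case: (rot_to s0c) => i r rr.
  have cy : cycle e (s0 :: r) by rewrite -rr rot_cycle.
  have ur : uniq (s0 :: r) by rewrite -rr rot_uniq.
  have mr w : (w \in c) = (w \in s0 :: r) by rewrite -rr mem_rot.
  have rS : {subset r <= ~: S}.
    move=> w wr; rewrite inE; apply/negP => wS.
    have ne : w != s0 by apply/eqP => ws; move: ur; rewrite /= -ws wr.
    have : 1 < #|cverts c :&: S|.
      apply: (card2_sub (x := w) (y := s0)) => //; rewrite !inE.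
        by rewrite mr inE wr orbT wS.
      by rewrite s0c s0S'.
    by rewrite ltnNge hc.
  have xr : x \in r by move: xc; rewrite mr inE => /orP[/eqP xs|//]; move: xS; rewrite xs s0S'.
  have yr : y \in r by move: yc; rewrite mr inE => /orP[/eqP xs|//]; move: yS; rewrite xs s0S'.
  clear rr; case: r cy ur mr rS xr yr => // h r' /cyc_path /= /andP[_ pr] _ _ rS xr yr.
  exact: (seg2 rS pr xr yr).
- clear hc; case: c uc sc cc noS xc yc => // h r _ _ /cyc_path pr noS xc yc.
  apply: (seg2 _ pr xc yc) => w wc; rewrite inE; apply/negP => wS.
  by move: (noS _ wc); rewrite /= wS.
Qed.


Lemma avoid D x1 a h : is_cycle e D -> cverts D :&: S = [set x1; a] -> x1 != a ->
  (forall v, connect R h v -> ~~ e x1 v) ->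
  forall u, u \in D -> u \notin S -> ~~ connect R h u.
Proof.
move=> [uD sD cD] tr ne hx u uD' uS.
have trm w : ((w \in D) && (w \in S)) = (w == x1) || (w == a).
  by move: (congr1 (fun A : {set T} => w \in A) tr); rewrite !inE.
have := trm x1; rewrite eqxx => /andP[x1D x1S].
have := trm a; rewrite eqxx orbT => /andP[aD aS].
case: (rot_to x1D) => i r rr.
have cy : cycle e (x1 :: r) by rewrite -rr rot_cycle.
have ur : uniq (x1 :: r) by rewrite -rr rot_uniq.
have mr w : (w \in D) = (w \in x1 :: r) by rewrite -rr mem_rot.
have ar : a \in r by move: aD; rewrite mr inE eq_sym (negPf ne).
have ur' := ur.
case/splitPr: ar cy ur mr => r1 r2 cy ur mr.
have nS w : w \in r1 ++ r2 -> w \notin S.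
  move=> wr; apply/negP => wS.
  have wD : w \in D by rewrite mr inE mem_cat inE; move: wr; rewrite mem_cat => /orP[]->; rewrite ?orbT.
  move: (trm w); rewrite wD wS /= => /(fun H => Logic.eq_sym H) /orP[]/eqP ew; subst w.
    by move: ur wr => /= /andP[hn _]; rewrite mem_cat => /orP[h1|h1]; move: hn; rewrite mem_cat inE h1 ?orbT.
  move: ur wr => /= /andP[_]; rewrite cat_uniq => /and3P[_ hn /andP[ha _]].
  rewrite mem_cat => /orP[h1|h1]; last by rewrite h1 in ha.
  by move: hn; rewrite /= h1.
have ur12 : u \in r1 ++ r2.
  move: uD'; rewrite mr inE mem_cat inE mem_cat.
  case/orP => [/eqP ux|/orP[->//|/orP[/eqP ua|->]]]; rewrite ?orbT //.
    by move: uS; rewrite ux x1S.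
  by move: uS; rewrite ua aS.
have pc : path e x1 (rcons (r1 ++ a :: r2) x1) := cy.
rewrite rcons_cat /= cat_path /= in pc; case/and3P: pc => p1 _ p2.
apply/negP => hu; clear cy ur ur' mr.
move: ur12; rewrite mem_cat => /orP[ur1|ur2].
- case: r1 p1 nS ur1 => // v0 r1' /= /andP[ex p1'] nS ur1.
  have sub : {subset v0 :: r1' <= ~: S}.
    by move=> w wr; rewrite inE; apply: nS; rewrite -cat_cons mem_cat wr.
  have c1 := seg2 sub p1' ur1 (mem_head _ _).
  have := hx v0 (connect_trans hu c1); by rewrite ex.
- case: r2 p2 nS ur2 => // v1 r2' /= /andP[_]; rewrite rcons_path => /andP[p2' el] nS ur2.
  have sub : {subset v1 :: r2' <= ~: S}.
    by move=> w wr; rewrite inE; apply: nS; rewrite mem_cat wr orbT.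
  have c1 := seg2 sub p2' ur2 (mem_last _ _).
  have := hx _ (connect_trans hu c1); by rewrite esym el.
Qed.

Lemma seg_cyc a p b q : cycle e (a :: p ++ b :: q) ->
  [/\ path e a p, e (last a p) b, path e b q & e (last b q) a].
Proof.
move=> cy; have pc : path e a (rcons (p ++ b :: q) a) := cy.
rewrite rcons_cat cat_path /= rcons_path in pc.
by case/and4P: pc.
Qed.

Lemma seg_tail x s y z : {subset s <= ~: S} -> path e x s -> y \in s -> z \in s -> connect R y z.
Proof.
case: s => // h s sub /= /andP[_ ps] ys zs; exact: (seg2 sub ps ys zs).
Qed.

Lemma cross_dec C a b : is_cycle e C -> cverts C :&: S = [set a; b] -> a != b ->
  crosses e S C ->
  exists p q u v, [/\ is_cycle e (a :: p ++ b :: q), (a :: p ++ b :: q) =i C,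
     size (a :: p ++ b :: q) = size C, {subset p ++ q <= ~: S} &
     [/\ u \in p, v \in q & ~~ connect R u v]].
Proof.
move=> iC tr ne [x [y [xin yin nc]]].
have trm w : ((w \in C) && (w \in S)) = (w == a) || (w == b).
  by move: (congr1 (fun A : {set T} => w \in A) tr); rewrite !inE.
have := trm a; rewrite eqxx => /andP[aC aS].
have := trm b; rewrite eqxx orbT => /andP[bC bS].
case: (rot_to aC) => i r rr.
have iC' : is_cycle e (a :: r) by rewrite -rr; apply: rot_is_cycle.
have mr w : (w \in a :: r) = (w \in C) by rewrite -rr mem_rot.
have sr : size (a :: r) = size C by rewrite -rr size_rot.
have br : b \in r by move: bC; rewrite -mr inE eq_sym (negPf ne).
case/splitPr: br iC' mr sr => p q iC' mr sr.
have nS : {subset p ++ q <= ~: S}.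
  move=> w wr; rewrite inE; apply/negP => wS.
  have wC : w \in C by rewrite -mr inE mem_cat inE; move: wr; rewrite mem_cat => /orP[]->; rewrite ?orbT.
  case: iC' => ur _ _.
  move: (trm w); rewrite wC wS /= => /(fun H => Logic.eq_sym H) /orP[]/eqP ew; subst w.
    by move: ur wr => /= /andP[hn _]; rewrite mem_cat => /orP[h1|h1]; move: hn; rewrite mem_cat inE h1 ?orbT.
  move: ur wr => /= /andP[_]; rewrite cat_uniq => /and3P[_ hn /andP[ha _]].
  rewrite mem_cat => /orP[h1|h1]; last by rewrite h1 in ha.
  by move: hn; rewrite /= h1.
have [_ _ cy'] := iC'.
have [pp _ pq _] := seg_cyc cy'.
have toS w : w \in cverts C :\: S -> w \in p ++ q.
  rewrite !inE => /andP[wS wC]; move: wC; rewrite -mr inE mem_cat inE.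
  case/orP => [/eqP wa|/orP[wp|/orP[/eqP wb|wq]]]; last by rewrite mem_cat wq orbT.
    2: by rewrite mem_cat wp.
    by move: wS; rewrite wa aS.
  by move: wS; rewrite wb bS.
have nSp : {subset p <= ~: S} by move=> w wp; apply: nS; rewrite mem_cat wp.
have nSq : {subset q <= ~: S} by move=> w wq; apply: nS; rewrite mem_cat wq orbT.
move: (toS _ xin) (toS _ yin); rewrite !mem_cat => /orP[xp|xq] /orP[yp|yq].
- by move: nc; rewrite (seg_tail nSp pp xp yp).
- by exists p, q, x, y; split.
- exists p, q, y, x; split => //; split => //; by rewrite restr_csym.
- by move: nc; rewrite (seg_tail nSq pq xq yq).
Qed.

Lemma rev_dec a p b q : is_cycle e (a :: p ++ b :: q) ->
  [/\ is_cycle e (a :: rev q ++ b :: rev p),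
      (a :: rev q ++ b :: rev p) =i (a :: p ++ b :: q) &
      size (a :: rev q ++ b :: rev p) = size (a :: p ++ b :: q)].
Proof.
have key : rot 1 (a :: rev q ++ b :: rev p) = rev (a :: p ++ b :: q).
  by rewrite rot1_cons rev_cons rev_cat rev_cons cat_rcons.
move=> [u sz cy]; split.
- split.
  + by rewrite -(rot_uniq 1) key rev_uniq.
  + by rewrite -(size_rot 1) key size_rev.
  + rewrite -(rot_cycle 1) key rev_cycle; by rewrite (@eq_cycle _ _ e) // => x y; rewrite esym.
- by move=> w; rewrite -(mem_rot 1) key mem_rev.
- by rewrite -(size_rot 1) key size_rev.
Qed.

Lemma path_head x s : path e x s -> s != [::] -> e x (head x s) /\ head x s \in s.
Proof. by case: s => //= y s /andP[-> _] _; rewrite mem_head. Qed.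

Lemma ar3 (n m k : nat) : m <= n -> k = (n + (m.+1)).+1 -> k <= (n.+1).*2.
Proof. move=> *; lia. Qed.

Lemma core a b p q u v x1 D :
  longest_cycle e (a :: p ++ b :: q) -> a \in S -> b \in S -> {subset p ++ q <= ~: S} ->
  u \in p -> v \in q -> ~~ connect R u v -> size q <= size p ->
  x1 \in S -> (forall w, connect R u w -> ~~ e x1 w) ->
  longest_cycle e D -> cverts D :&: S = [set x1; a] ->
  connected_in e (~: [set a]) -> False.
Proof.
move=> lC aS bS nS up vq nuv hsz x1S hx lD trD G2a.
have [[uC szC cC] lCm] := lC. have [[uD szD cD] lDm] := lD.
have sDC : size D = size (a :: p ++ b :: q).
  by apply/eqP; rewrite eqn_leq (lCm D lD.1) (lDm _ lC.1).
have [pp eb pq eqa] := seg_cyc cC.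
have nSp : {subset p <= ~: S} by move=> w wp; apply: nS; rewrite mem_cat wp.
have nSq : {subset q <= ~: S} by move=> w wq; apply: nS; rewrite mem_cat wq orbT.
have cu w : w \in p -> connect R u w by move=> wp; exact: (seg_tail nSp pp up wp).
have cv w : w \in q -> connect R v w by move=> wq; exact: (seg_tail nSq pq vq wq).
have pn : p != [::] by case: (p) up.
have qn : q != [::] by case: (q) vq.
have [eah hp] := path_head pp pn.
have x1a : x1 != a.
  apply/eqP => xa; move: (hx _ (cu _ hp)); by rewrite xa eah.
have x1b : x1 != b.
  apply/eqP => xb; have lp : last a p \in p by case: (p) pn => // ? ? _; rewrite /= mem_last.
  by move: (hx _ (cu _ lp)); rewrite xb esym eb.
have hav := avoid lD.1 trD x1a hx.
have trm w : ((w \in D) && (w \in S)) = (w == x1) || (w == a).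
  by move: (congr1 (fun A : {set T} => w \in A) trD); rewrite !inE.
have aD : a \in D by have := trm a; rewrite eqxx orbT => /andP[].
have bD : b \notin D.
  apply/negP => bD; move: (trm b); rewrite bD bS /= eq_sym (negPf x1b) /=.
  have : b != a.
    by apply/eqP => ba; move: uC; rewrite /= mem_cat inE ba eqxx orbT.
  by move/negPf => ->.
have pD w : w \in p -> w \notin D.
  move=> wp; apply/negP => wD; have := hav w wD.
  have := nSp w wp; rewrite inE => -> /(_ isT); by rewrite (cu w wp).
case: (boolP (has (fun z => connect R v z) D)) => [/hasP [y yD cvy] | /hasPn noK2].
-
  have [ebq0 q0q] := path_head pq qn.
  set q0 := head b q in ebq0 q0q.
  have cq0y : connect R q0 y := conn_tr (cv _ q0q) cvy.
  case/connectP: cq0y => s ps ly.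
  have pe : path e b (q0 :: s) by rewrite /= ebq0 (path_restr_e ps).
  have h12 : forall z, pred1 b z -> z \notin D by move=> z /eqP ->.
  have ld : last b (q0 :: s) \in D by rewrite /= -ly.
  have [y' [w [[/eqP Py' pw uw lw wn] [hint sub]]]] := bridge h12 (eqxx b) pe ld.
  subst y'.
  have wK z : z \in w -> connect R q0 z /\ z \notin S.
    move=> zw; have : z \in b :: q0 :: s by apply: sub; rewrite inE zw orbT.
    have zb : z != b by apply/eqP => zb; move: uw; rewrite /= -zb zw.
    rewrite inE (negPf zb) /= => zs.
    have cz : connect R q0 z by apply: path_connect ps _ zs.
    split => //; case: (eqVneq q0 z) => [<-|ne]; first by have := nSq _ q0q; rewrite inE.
    by have := connect_restr_mem cz ne; rewrite inE.
  have wb z : z \in w -> z != b by move=> zw; apply/eqP => zb; move: uw; rewrite /= -zb zw.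
  apply: (cyc_join esym lD aD (pp := rcons p b) (w := w)).
  + by rewrite rcons_path pp eb.
  + by move: uC; rewrite -cat_rcons -cat_cons cat_uniq => /andP[].
  + move=> z; rewrite mem_rcons inE => /orP[/eqP->//|]; exact: pD.
  + by rewrite last_rcons.
  + by case/andP: uw.
  + exact: wn.
  + by rewrite last_rcons.
  + move=> z zw zD; rewrite last_rcons; apply/eqP; apply: contraT => ne.
    by have := hint z zw ne; rewrite zD andbF.
  + move=> z zw; have [cz zS] := wK z zw.
    rewrite inE mem_rcons inE !negb_or (wb z zw) /=; apply/andP; split.
      by apply/eqP => za; move: zS; rewrite za aS.
    apply/negP => zp; move: nuv; apply/negP/negPn.
    apply: connect_trans (cu z zp) _; rewrite restr_csym //.
    exact: connect_trans (cv _ q0q) cz.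
  + rewrite size_rcons sDC; apply: (ar3 hsz); by rewrite /= size_cat.
-
  set C' := p ++ b :: q.
  have C'D z : z \in C' -> z \notin D.
    rewrite mem_cat inE => /orP[/pD //|/orP[/eqP->//|zq]].
    by apply/negP => zD; have := noK2 z zD; rewrite (cv z zq).
  have x1D : x1 \in D by have := trm x1; rewrite eqxx => /andP[].
  have bA : b \in ~: [set a].
    rewrite !inE; apply/eqP => ba; move: uC; rewrite /= mem_cat inE ba eqxx orbT; done.
  have x1A : x1 \in ~: [set a] by rewrite !inE.
  case/connectP: (G2a _ _ bA x1A) => s ps lx.
  have h12 : forall z, z \in C' -> z \notin D by exact: C'D.
  have bC' : b \in C' by rewrite mem_cat mem_head orbT.
  have ld : last b s \in D by rewrite -lx.
  have [y [w [[yC' pw uw lw wn] [hint sub]]]] :=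
    bridge h12 bC' ps ld.
  have wa z : z \in w -> z != a.
    move=> zw; have : z \in b :: s by apply: sub; rewrite inE zw orbT.
    rewrite inE => /orP[/eqP ->|zs]; first by move: bA; rewrite !inE.
    by have := path_restr_mem ps zs; rewrite !inE.
  have [A [pA lA sA uA hA]] := cyc_arc esym cC uC yC'.
  apply: (cyc_join esym lD aD pA uA (w := w)).
  + by move=> z /sA; exact: C'D.
  + by rewrite lA; exact: (path_restr_e pw).
  + by case/andP: uw.
  + exact: wn.
  + by rewrite lA.
  + move=> z zw zD; rewrite lA; apply/eqP; apply: contraT => ne.
    by have := hint z zw ne; rewrite zD andbF.
  + move=> z zw; rewrite inE negb_or (wa z zw) /=; apply/negP => /sA zC.
    case: (eqVneq z (last y w)) => [ez|ne].
      by move: lw; rewrite -ez; apply/negP; apply: C'D.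
    by have := hint z zw ne; rewrite zC.
  + by rewrite sDC.
Qed.

End Graph.


Section Tree.
Variable I : finType.
Variable tE : rel I.
Hypothesis tr : is_tree tE.
Variable t : I.
Local Notation T' := (restrict tE (~: [set t])).

Lemma tsym : symmetric tE. Proof. by case: tr. Qed.
Lemma tirr : irreflexive tE. Proof. by case: tr. Qed.

Lemma branch_ex j : j != t -> exists2 t', tE t t' & connect T' t' j.
Proof.
case: tr => _ _ _ tconn _ jt.
have := tconn t j; rewrite !inE => /(_ isT isT) /connectP [s ps lj].
move: jt; rewrite lj => jt.
have pe := path_restr_e ps.
move: jt; case: (shortenP pe) => s2 p2 u2 _ {pe ps}.
case: s2 p2 u2 => [|t1 s2]; first by move=> _ _ /=; rewrite eqxx.
move=> /= /andP[et1 p2] /andP[ntin u2] jt.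
exists t1 => //; apply/connectP; exists s2 => //.
apply: path_to_restr => //.
  by rewrite !inE; apply/eqP => h; move: ntin; rewrite h mem_head.
by move=> z zs; rewrite !inE; apply/eqP => h; move: ntin; rewrite -h inE zs orbT.
Qed.

Lemma branch_uniq t1 t2 j : tE t t1 -> tE t t2 -> connect T' t1 j -> connect T' t2 j -> t1 = t2.
Proof.
move=> e1 e2 c1 c2.
have c12 : connect T' t1 t2 by apply: connect_trans c1 _; rewrite (restr_csym tsym).
apply/eqP; apply: contraT => ne.
case/connectP: c12 => s ps l2.
move: l2; case: (shortenP ps) => s2 p2 u2 _ l2 {ps}.
case: tr => _ _ _ _ acyc; exfalso; apply: (acyc (t :: t1 :: s2)).
have t1t : t1 != t by apply/eqP => h; move: e1; rewrite h tirr.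
have s2t : {subset s2 <= ~: [set t]} := path_restr_mem p2.
split.
- rewrite cons_uniq u2 andbT inE negb_or eq_sym t1t /=.
  by apply/negP => /s2t; rewrite !inE eqxx.
- by case: (s2) l2 => [/= h|//]; move: ne; rewrite h eqxx.
- rewrite /= e1 rcons_path (path_restr_e p2) /=.
  by rewrite -l2 tsym.
Qed.

End Tree.

Section TD.
Variables (T I : finType) (e : rel T) (tE : rel I) (B : I -> {set T}) (k : nat) (t : I).
Hypothesis full : full_td e k tE B.
Local Notation T' := (restrict tE (~: [set t])).
Local Notation R := (restrict e (~: B t)).

Lemma td_key u : u \notin B t ->
  exists2 x1, x1 \in B t & forall w, connect R u w -> ~~ e x1 w.
Proof.
case: full => [[tr _ cover ecover sub] _ bsize badj] ut.
have L3 v i j : v \notin B t -> v \in B i -> v \in B j -> connect T' i j.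
  move=> vt vi vj.
  have := sub v i j; rewrite !inE => /(_ vi vj).
  apply: connect_sub => x y /and3P[]; rewrite !inE => xv yv exy.
  apply: connect1; rewrite /restrict /= exy !inE andbT.
  by apply/andP; split; apply/eqP => h; [move: xv|move: yv]; rewrite h (negPf vt).
have [i0 ui0] := cover u.
have i0t : i0 != t by apply/eqP => h; move: ui0; rewrite h (negPf ut).
have [t' ett' ct'i0] := branch_ex tr i0t.
pose Pp v := forall j, v \in B j -> connect T' t' j.
have Pu : Pp u by move=> j uj; apply: connect_trans ct'i0 (L3 u i0 j ut ui0 uj).
have step : forall s x, Pp x -> x \notin B t -> path R x s -> Pp (last x s).
  elim=> [//|y s IH] x Px xt /= /andP[/and3P[_ yS exy] ps].
  apply: IH => //; last by move: yS; rewrite inE.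
  have [j0 /andP[xj0 yj0]] := ecover x y exy.
  have yt : y \notin B t by move: yS; rewrite inE.
  by move=> j yj; apply: connect_trans (Px j0 xj0) (L3 y j0 j yt yj0 yj).
have hcard : 0 < #|B t :\: B t'| by rewrite cardsD bsize badj // subSnn.
case/card_gt0P: hcard => x1; rewrite inE => /andP[x1t' x1t].
exists x1 => // w cuw; apply/negP => ex.
have wt : w \notin B t.
  case: (eqVneq u w) => [<-//|ne]; by have := connect_restr_mem cuw ne; rewrite inE.
have Pw : Pp w by case/connectP: cuw => s ps ->; apply: step.
have [j /andP[x1j wj]] := ecover x1 w ex.
have ct'j := Pw j wj.
have jt : j != t by apply/eqP => h; move: wj; rewrite h (negPf wt).
have := sub x1 j t; rewrite !inE => /(_ x1j x1t) /connectP [s ps lt].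
move: lt; case: (shortenP ps) => s2 p2 u2 _ lt {ps}.
case/lastP: s2 p2 u2 lt => [_ _ /= h|s3 z]; first by move: jt; rewrite h eqxx.
rewrite last_rcons => p2 u2 zt; subst z.
rewrite rcons_path in p2; case/andP: p2 => p3 /and3P[].
rewrite inE => t''x1 _ et''.
set t'' := last j s3 in t''x1 et''.
have s3t : t \notin j :: s3 by move: u2; rewrite -rcons_cons rcons_uniq => /andP[].
have p3' : path T' j s3.
  apply: path_to_restr (path_restr_e p3).
    by rewrite !inE; apply/eqP => h; move: s3t; rewrite h mem_head.
  by move=> z zs; rewrite !inE; apply/eqP => h; move: s3t; rewrite -h inE zs orbT.
have cjt'' : connect T' t'' j.
  by rewrite (restr_csym (tsym tr)); apply/connectP; exists s3.
have et : tE t t'' by rewrite (tsym tr).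
have ht := branch_uniq tr ett' et ct'j cjt''.
by move: x1t'; rewrite ht t''x1.
Qed.

End TD.


Lemma bigmin_le (A : eqType) (r : seq A) (P : pred A) (F : A -> nat) x0 (y : A) :
  y \in r -> P y -> \big[minn/x0]_(i <- r | P i) F i <= F y.
Proof.
elim: r => //= z r IH; rewrite inE => /orP[/eqP <-|yr] Py; rewrite big_cons.
  by rewrite Py geq_minl.
case: ifP => _; last exact: IH.
by apply: leq_trans (geq_minr _ _) (IH yr Py).
Qed.

Lemma ar4 (k L : nat) : 0 < k -> k <= L -> k.+1 - (true : nat).+1 < L.
Proof. move=> *; lia. Qed.

Lemma asboolT (P : Prop) : P -> asbool P.
Proof. by rewrite /asbool; case: excluded_middle_informative. Qed.

Lemma lct_le (T : finType) (e : rel T) (Y : {set T}) : hitting e Y -> lct e <= #|Y|.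
Proof.
move=> h; rewrite /lct; apply: (bigmin_le (P := fun X => asbool (hitting e X))).
  by apply: mem_index_enum.
exact: asboolT.
Qed.

Unset Implicit Arguments.

(* lct(G) > |V_t| - 2 is written over nat as |V_t| < lct(G) + 2 *)
Theorem lemma6p1 (T : finType) (e : rel T) (esym : symmetric e)
    (eirr : irreflexive e) (G2 : two_connected e)
    (I : finType) (tE : rel I) (B : I -> {set T}) (k : nat)
    (full : full_td e k tE B) (t : I)
    (hlct : #|B t| < lct e + 2) :
  exists c (l : nat), l <= 2 /\ l_attractor e (B t) c l.
Proof.
apply: NNPP => Hno.
have full' := full.
case: full' => [[tdi _ cover ecover sub] tw bsize badj].
have hS : #|B t| = k.+1 := bsize t.
have hl : k <= lct e by move: hlct; rewrite hS addn2 !ltnS.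
have noSmall c : longest_cycle e c -> #|cverts c :&: B t| <= 1 -> False.
  move=> lc hc; apply: Hno; exists c, #|cverts c :&: B t|; split.
    by apply: leq_trans hc _.
  split=> //; split => //.
    exact: (@trace_le1_fenced T e esym (B t) c (proj1 lc) hc).
  move=> c' lc' eq.
  apply: (@trace_le1_fenced T e esym (B t) c' (proj1 lc')).
  by rewrite -eq.
have avoidY (Y : {set T}) : #|Y| < lct e ->
    exists c, longest_cycle e c /\ forall x, x \in Y -> x \notin c.
  move=> hY; apply: NNPP => hn; have : hitting e Y; last by move/lct_le; rewrite leqNgt hY.
  move=> c lc; apply: NNPP => hn2; apply: hn; exists c; split => // x xY.
  by apply/negP => xc; apply: hn2; exists x.
have k1 : 0 < k.
  case: G2 => h3 hc.
  have : 1 < #|[set: T]| by rewrite cardsT; apply: ltnW.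
  case/card_gt1P => x0 [y0 [_ _ ne]].
  have := hc set0; rewrite cards0 => /(_ isT x0 y0); rewrite !inE => /(_ isT isT).
  case/connectP => [[|z s]]; first by move=> _ /= h; move: ne; rewrite h eqxx.
  move=> /= /andP[/and3P[_ _ exz] _] _.
  have [j /andP[xj zj]] := ecover x0 z exz.
  have : 1 < #|B j|.
    apply/card_gt1P; exists x0, z; split => //.
    by apply/eqP => h; move: exz; rewrite h eirr.
  by rewrite bsize ltnS.
have pair x y : x \in B t -> y \in B t -> x != y ->
    exists c, longest_cycle e c /\ cverts c :&: B t = [set x; y].
  move=> xS yS ne.
  have sxy : [set x; y] \subset B t by apply/subsetP => z; rewrite !inE => /orP[]/eqP->.
  have cY : #|B t :\: [set x; y]| < lct e.
    rewrite cardsD (setIidPr sxy) cards2 ne hS.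
    exact: ar4 k1 hl.
  have [c [lc hc]] := avoidY _ cY.
  exists c; split => //.
  have sub2 : cverts c :&: B t \subset [set x; y].
    apply/subsetP => z; rewrite !inE => /andP[zc zS].
    apply: contraT => zn; move: (hc z); rewrite !inE zS andbT => /(_ zn).
    by rewrite zc.
  apply/eqP; rewrite eqEcard sub2 cards2 ne /=.
  by rewrite leqNgt; apply/negP => /noSmall; apply.
have : 1 < #|B t| by rewrite hS ltnS.
case/card_gt1P => a [b [aS bS ab]].
have [C0 [lC0 trC0]] := pair a b aS bS ab.
have nat : ~ attractor e (B t) C0.
  move=> hat; apply: Hno; exists C0, 2; split => //; split => //.
  by rewrite trC0 cards2 ab.
have [C [lC trC crC]] : exists C, [/\ longest_cycle e C, cverts C :&: B t = [set a; b] &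
    crosses e (B t) C].
  apply: NNPP => hn; apply: nat; split => //.
    by move=> cr; apply: hn; exists C0.
  move=> c' lc' eq cr; apply: hn; exists c'; split => //.
  by rewrite -eq.
have main : forall p q u v, longest_cycle e (a :: p ++ b :: q) ->
    {subset p ++ q <= ~: B t} -> u \in p -> v \in q ->
    ~~ connect (restrict e (~: B t)) u v -> size q <= size p -> False.
  move=> p q u v lC' nS up vq nuv hsz.
  have nSp : {subset p <= ~: B t} by move=> w wp; apply: nS; rewrite mem_cat wp.
  have uS : u \notin B t by have := nSp u up; rewrite inE.
  have [x1 x1S hx] := td_key full uS.
  have [[_ _ cy] _] := lC'.
  have [pp _ _ _] := seg_cyc cy.
  have pn : p != [::] by case: (p) up.
  have [eah hp] := path_head pp pn.
  have x1a : x1 != a.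
    apply/eqP => h; have := hx _ (seg_tail esym nSp pp up hp); by rewrite h eah.
  have [D [lD trD]] := pair x1 a x1S aS x1a.
  have G2a : connected_in e (~: [set a]) by apply: (proj2 G2); rewrite cards1.
  exact: (core esym lC' aS bS nS up vq nuv hsz x1S hx lD trD G2a).
have [p [q [u [v [iC' mC' sC' nS [up vq nuv]]]]]] := cross_dec esym (proj1 lC) trC ab crC.
have longeq X : is_cycle e X -> size X = size C -> longest_cycle e X.
  by move=> iX sX; split => // c' ic'; rewrite sX; apply: (proj2 lC).
case: (leqP (size q) (size p)) => hsz.
  exact: (main p q u v (longeq _ iC' sC') nS up vq nuv hsz).
have [iR mR sR] := rev_dec esym iC'.
apply: (main (rev q) (rev p) v u (longeq _ iR (etrans sR sC'))).
- by move=> w; rewrite mem_cat !mem_rev orbC -mem_cat; apply: nS.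
- by rewrite mem_rev.
- by rewrite mem_rev.
- by rewrite restr_csym.
- by rewrite !size_rev ltnW.
Qed.
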